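(* Let $R$ be a binary relation on a set $A$ and $x\in A$. (1) If $x\in\mathrm{WN}$, $x\in\mathrm{NP}^{\to}$ and $x\in\mathrm{SM}$, then $x\in\mathrm{SN}$. (2) If every element of $A$ is in $\mathrm{WN}$, then every $x\in\mathrm{SM}$ is in $\mathrm{SN}$; in particular, if every element is in $\mathrm{WN}$ and every element is in $\mathrm{SM}$, then every element is in $\mathrm{SN}$. (Constructively.)
   Context: Work in constructive (intuitionistic) logic / Martin-Löf type theory without excluded middle or other axioms. Let $R$ be a binary relation on $A$; write $a\to b$ for $R\,a\,b$ and $\to^*$ for its reflexive–transitive closure. $a\in\mathrm{NF}$ iff there is no $b$ with $a\to b$. $a\in\mathrm{WN}$ iff $a\to^* b$ for some $b\in\mathrm{NF}$. $\mathrm{SN}$ is defined inductively: $a\in\mathrm{SN}$ if every $b$ with $a\to b$ is in $\mathrm{SN}$. $a\in\mathrm{NP}^{\to}$ iff for all $c\in A$ and $b\in\mathrm{NF}$, $a\to^* c$ and $a\to^* b$ imply $c\to^* b$. $a\in\mathrm{MF}$ iff for all $b$, $a\to^* b$ implies $b\to^* a$. $\mathrm{SM}$ is defined inductively by two rules: if $a\in\mathrm{MF}$ then $a\in\mathrm{SM}$; and if every $b$ with $a\to b$ is in $\mathrm{SM}$ then $a\in\mathrm{SM}$. *)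

(* Defs.v *)
From Stdlib Require Import Relations.

Section Rewriting.
Variable A : Type.
Variable R : A -> A -> Prop.

Definition RT : A -> A -> Prop := clos_refl_trans A R.

Definition NF (a : A) : Prop := ~ (exists b, R a b).

Definition WN (a : A) : Prop := exists b, RT a b /\ NF b.

Inductive SN : A -> Prop :=
  | SN_intro : forall a, (forall b, R a b -> SN b) -> SN a.

Definition NP (a : A) : Prop :=
  forall c b, NF b -> RT a c -> RT a b -> RT c b.

Definition MF (a : A) : Prop := forall b, RT a b -> RT b a.

Inductive SM : A -> Prop :=
  | SM_MF : forall a, MF a -> SM a
  | SM_step : forall a, (forall b, R a b -> SM b) -> SM a.

End Rewriting.

Arguments RT {A} R.
Arguments NF {A} R.
Arguments WN {A} R.
Arguments SN {A} R.
Arguments NP {A} R.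
Arguments MF {A} R.
Arguments SM {A} R.

(* Main.v *)
Require Import Defs.
From Stdlib Require Import Relations.

Lemma nf_rt (A : Type) (R : A -> A -> Prop) b y : NF R b -> RT R b y -> y = b.
Proof.
  intros Hn H. apply clos_rt_rt1n in H. destruct H as [|x y' z Hr _].
  - reflexivity.
  - exfalso. apply Hn. eauto.
Qed.

Lemma mf_sn (A : Type) (R : A -> A -> Prop) x : WN R x -> MF R x -> SN R x.
Proof.
  intros [n [Hxn Hn]] Hm. pose proof (nf_rt A R n x Hn (Hm n Hxn)). subst.
  constructor. intros b Hb. exfalso. apply Hn. eauto.
Qed.

Theorem mainTheorem10 (A : Type) (R : A -> A -> Prop) :
  (forall x : A, WN R x -> NP R x -> SM R x -> SN R x) /\
  ((forall a : A, WN R a) -> forall x : A, SM R x -> SN R x) /\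
  ((forall a : A, WN R a) -> (forall a : A, SM R a) -> forall x : A, SN R x).
Proof.
  assert (H2 : (forall a : A, WN R a) -> forall x : A, SM R x -> SN R x).
  { intros W x H. induction H as [a Hm | a _ IH].
    - apply mf_sn; auto.
    - constructor. exact IH. }
  split; [|split; [exact H2| intros W S x; apply H2; auto]].
  intros x Wx Nx Sx. revert Wx Nx. induction Sx as [a Hm | a _ IH]; intros Wx Nx.
  - apply mf_sn; auto.
  - constructor. intros b Hb.
    assert (Hab : RT R a b) by (apply rt_step; exact Hb).
    apply IH; [exact Hb| |].
    + destruct Wx as [n [Han Hn]]. exists n. split; [exact (Nx b n Hn Hab Han)|exact Hn].
    + intros c m Hm Hbc Hbm. apply (Nx c m Hm).
      * apply rt_trans with b; auto.
      * apply rt_trans with b; auto.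
Qed.
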